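(* Let $(\Gamma,\psi)$ be an $H$-asymptotic couple with asymptotic integration, and let $S$ be a nonempty convex subset of $\Gamma$ without a greatest element which has the yardstick property. Then $S$ is jammed if and only if $S^{\downarrow}=\Gamma^{<}$.
   Context: An asymptotic couple is a pair $(\Gamma,\psi)$ with $\Gamma$ an ordered abelian group and $\psi:\Gamma\setminus\{0\}\to\Gamma$ such that for all nonzero $\alpha,\beta$: $\alpha+\beta\ne0\Rightarrow\psi(\alpha+\beta)\ge\min(\psi(\alpha),\psi(\beta))$; $\psi(k\alpha)=\psi(\alpha)$ for $k\in\mathbb{Z}\setminus\{0\}$; $\alpha>0\Rightarrow\alpha+\psi(\alpha)>\psi(\beta)$. $H$-asymptotic: $0<\alpha\le\beta\Rightarrow\psi(\alpha)\ge\psi(\beta)$. Write $\gamma'=\gamma+\psi(\gamma)$. Asymptotic integration: every $\alpha\in\Gamma$ equals $\gamma'$ for some $\gamma\ne0$, necessarily unique, denoted $\int\alpha$. Contraction map: $\chi(\alpha)=\int\psi(\alpha)$ for $\alpha\ne0$, $\chi(0)=0$. Yardstick property of a nonempty convex $S$ without greatest element: there is $\beta\in S$ with $\gamma-\chi(\gamma)\in S$ for all $\gamma\in S$ with $\gamma>\beta$. $S^{\downarrow}=\{\delta\in\Gamma:\delta\le\sigma\text{ for some }\sigma\in S\}$, $\Gamma^{<}=\{\gamma\in\Gamma:\gamma<0\}$. A set $S\subseteq\Gamma$ is jammed if $S\ne\emptyset$, $S$ has no greatest element, and for every convex subgroup $\Delta\ne\{0\}$ of $\Gamma$ there is $\gamma_0\in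 S$ such that $\gamma_1-\gamma_0\in\Delta$ for every $\gamma_1\in S$ with $\gamma_1>\gamma_0$. *)

(* Defs.v *)
From HB Require Import structures.
From mathcomp Require Import all_boot all_order all_algebra.
From Stdlib Require Import ClassicalEpsilon.
Set Implicit Arguments. Unset Strict Implicit. Unset Printing Implicit Defensive.
Import Order.TTheory GRing.Theory Num.Theory.
Local Open Scope ring_scope.

Definition ordered_abelian_group (G : porderZmodType) : Prop :=
  (forall x y : G, (x <= y) || (y <= x)) /\
  (forall x y z : G, x <= y -> x + z <= y + z).

(* psi is a total function G -> G; only its values on G \ {0} matter. *)
Definition asymptotic_couple (G : porderZmodType) (psi : G -> G) : Prop :=
  [/\ forall a b : G, a != 0 -> b != 0 -> a + b != 0 ->
        Order.min (psi a) (psi b) <= psi (a + b),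
      forall (a : G) (k : int), a != 0 -> k != 0 -> psi (a *~ k) = psi a
    & forall a b : G, 0 < a -> b != 0 -> psi b < a + psi a].

Definition H_asymptotic (G : porderZmodType) (psi : G -> G) : Prop :=
  forall a b : G, 0 < a -> a <= b -> psi b <= psi a.

Definition deriv (G : porderZmodType) (psi : G -> G) (g : G) : G := g + psi g.

Definition has_asymptotic_integration (G : porderZmodType) (psi : G -> G) : Prop :=
  forall a : G, exists g : G, g != 0 /\ deriv psi g = a.

(* \int a : some nonzero g with g' = a (unique under the standing assumptions);
   defaults to 0 if no such g exists. *)
Definition integral (G : porderZmodType) (psi : G -> G) (a : G) : G :=
  match excluded_middle_informative (exists g : G, g != 0 /\ deriv psi g = a) with
  | left H => proj1_sig (constructive_indefinite_description _ H)
  | right _ => 0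
  end.

Definition chi (G : porderZmodType) (psi : G -> G) (a : G) : G :=
  if a == 0 then 0 else integral psi (psi a).

Definition convex (G : porderZmodType) (S : G -> Prop) : Prop :=
  forall a b c : G, S a -> S c -> a <= b -> b <= c -> S b.

Definition nonempty (G : porderZmodType) (S : G -> Prop) : Prop := exists s, S s.

Definition no_greatest (G : porderZmodType) (S : G -> Prop) : Prop :=
  forall s, S s -> exists t, S t /\ s < t.

Definition yardstick (G : porderZmodType) (psi : G -> G) (S : G -> Prop) : Prop :=
  exists b : G, S b /\ forall g : G, S g -> b < g -> S (g - chi psi g).

Definition convex_subgroup (G : porderZmodType) (D : G -> Prop) : Prop :=
  D 0 /\ (forall x y, D x -> D y -> D (x - y)) /\ convex D.

Definition jammed (G : porderZmodType) (S : G -> Prop) : Prop :=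
  nonempty S /\ no_greatest S /\
  forall D : G -> Prop, convex_subgroup D -> (exists d, D d /\ d != 0) ->
    exists g0, S g0 /\ forall g1, S g1 -> g0 < g1 -> D (g1 - g0).

Definition downset (G : porderZmodType) (S : G -> Prop) : G -> Prop :=
  fun d => exists s, S s /\ d <= s.

(* Main.v *)
Require Import Defs.
From mathcomp Require Import all_boot all_order all_algebra.
From Stdlib Require Import ClassicalEpsilon.
Import Order.TTheory GRing.Theory Num.Theory.
Set Implicit Arguments. Unset Strict Implicit.
Local Open Scope ring_scope.

Lemma h_ltD (G : porderZmodType) :
  (forall x y z : G, x <= y -> x + z <= y + z) ->
  forall x y z : G, x < y -> x + z < y + z.
Proof.
move=> Htr x y z; rewrite !lt_def => /andP[ne le]; apply/andP; split.
  by rewrite (inj_eq (addIr z)).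
exact: Htr.
Qed.

Lemma h_oppLe (G : porderZmodType) :
  (forall x y z : G, x <= y -> x + z <= y + z) ->
  forall x y : G, x <= y -> - y <= - x.
Proof.
move=> Htr x y /(Htr _ _ (- x - y)).
have -> : x + (- x - y) = - y by rewrite addrA addrN add0r.
by have -> : y + (- x - y) = - x by rewrite addrC -addrA addNr addr0.
Qed.

Lemma h_oppLt (G : porderZmodType) :
  (forall x y z : G, x <= y -> x + z <= y + z) ->
  forall x y : G, x < y -> - y < - x.
Proof.
move=> Htr x y; rewrite !lt_def => /andP[ne le]; apply/andP; split.
  by rewrite (inj_eq (@oppr_inj _)) eq_sym.
exact: h_oppLe.
Qed.

Lemma h_nle (G : porderZmodType) :
  (forall x y : G, (x <= y) || (y <= x)) ->
  forall x y : G, ~ (x <= y) -> y < x.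
Proof.
move=> Htot x y nle; rewrite lt_def; case/orP: (Htot x y) => h; first by [].
rewrite h andbT; apply/negP => /eqP e; apply: nle; by rewrite e.
Qed.

Lemma h_psiN (G : porderZmodType) (psi : G -> G) :
  asymptotic_couple psi -> forall x, x != 0 -> psi (- x) = psi x.
Proof.
case=> _ H2 _ x hx; by rewrite -mulrN1z H2.
Qed.

Lemma h_chi (G : porderZmodType) (psi : G -> G) :
  has_asymptotic_integration psi -> forall x, x != 0 ->
  chi psi x != 0 /\ chi psi x + psi (chi psi x) = psi x.
Proof.
move=> Hai x hx; rewrite /chi (negbTE hx) /integral.
case: excluded_middle_informative => [H|H]; last by exfalso; apply: H; exact: Hai.
by case: (constructive_indefinite_description _ H).
Qed.

Lemma h_chi_neg (G : porderZmodType) (psi : G -> G) :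
  (forall x y : G, (x <= y) || (y <= x)) ->
  asymptotic_couple psi -> has_asymptotic_integration psi ->
  forall x, x != 0 -> chi psi x < 0.
Proof.
move=> Htot Hac Hai x hx; have [nz e] := h_chi Hai hx.
apply: h_nle => // hle.
have pos : 0 < chi psi x by rewrite lt_def nz hle.
case: Hac => _ _ H3; have := H3 _ _ pos hx; by rewrite e ltxx.
Qed.

Lemma h_psi_neg (G : porderZmodType) (psi : G -> G) :
  (forall x y z : G, x <= y -> x + z <= y + z) ->
  asymptotic_couple psi -> H_asymptotic psi ->
  forall a b : G, a <= b -> b < 0 -> psi a <= psi b.
Proof.
move=> Htr Hac HH a b ab b0.
have a0 : a < 0 by exact: le_lt_trans ab b0.
have nb : b != 0 by rewrite lt_eqF.
have na : a != 0 by rewrite lt_eqF.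
rewrite -(h_psiN Hac na) -(h_psiN Hac nb); apply: HH.
  by rewrite -oppr0; apply: h_oppLt.
exact: h_oppLe.
Qed.

Lemma h_deriv_mono (G : porderZmodType) (psi : G -> G) :
  (forall x y : G, (x <= y) || (y <= x)) ->
  (forall x y z : G, x <= y -> x + z <= y + z) ->
  asymptotic_couple psi -> H_asymptotic psi ->
  forall a b : G, a < 0 -> b < 0 -> a + psi a <= b + psi b -> a <= b.
Proof.
move=> Htot Htr Hac HH a b a0 b0 h; apply: contraT => nle.
have ba := h_nle Htot (negP nle).
have p := h_psi_neg Htr Hac HH (ltW ba) a0.
have h1 : b + psi b < a + psi b by exact: h_ltD.
have h2 : a + psi b <= a + psi a by rewrite addrC [a + _]addrC; exact: Htr.
have := lt_le_trans (lt_le_trans h1 h2) h; by rewrite ltxx.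
Qed.

Lemma h_Dsub (G : porderZmodType) (psi : G -> G) (C : G) :
  (forall x y : G, (x <= y) || (y <= x)) ->
  (forall x y z : G, x <= y -> x + z <= y + z) ->
  asymptotic_couple psi -> H_asymptotic psi ->
  convex_subgroup (fun x : G => x = 0 \/ C < psi x).
Proof.
move=> Htot Htr Hac HH.
have Hac' := Hac; case: Hac' => H1 _ _.
split; first by left.
split.
  move=> x y Dx Dy.
  have [->|nx] := eqVneq x 0.
    rewrite sub0r; have [->|ny] := eqVneq y 0; first by left; rewrite oppr0.
    case: Dy => [y0|hy]; first by rewrite y0 eqxx in ny.
    by right; rewrite h_psiN.
  have [->|ny] := eqVneq y 0; first by rewrite subr0.
  have [e|nxy] := eqVneq (x - y) 0; first by left.
  case: Dx => [x0|hx]; first by rewrite x0 eqxx in nx.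
  case: Dy => [y0|hy]; first by rewrite y0 eqxx in ny.
  have nyy : - y != 0 by rewrite oppr_eq0.
  right; have := H1 x (- y) nx nyy nxy.
  rewrite h_psiN // /Order.min; case: ifP => _ h; exact: lt_le_trans h.
move=> a b c Da Dc ab bc.
have [->|nb] := eqVneq b 0; first by left.
case/orP: (Htot b 0) => hb.
  have b0 : b < 0 by rewrite lt_def eq_sym nb hb.
  have a0 : a < 0 by exact: le_lt_trans ab b0.
  case: Da => [ae|ha]; first by rewrite ae ltxx in a0.
  right; apply: lt_le_trans ha _; exact: h_psi_neg.
have b0 : 0 < b by rewrite lt_def nb hb.
have c0 : 0 < c by exact: lt_le_trans b0 bc.
case: Dc => [ce|hc]; first by rewrite ce ltxx in c0.
right; apply: lt_le_trans hc _; exact: HH.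
Qed.

Lemma h_core (G : porderZmodType) (psi : G -> G) (S : G -> Prop) (p : G) :
  (forall x y : G, (x <= y) || (y <= x)) ->
  (forall x y z : G, x <= y -> x + z <= y + z) ->
  asymptotic_couple psi -> H_asymptotic psi -> has_asymptotic_integration psi ->
  no_greatest S -> yardstick psi S -> jammed S -> p != 0 ->
  (exists m, S m /\ forall g, S g -> m < g -> g != 0 /\ psi g <= psi p) -> False.
Proof.
move=> Htot Htr Hac HH Hai Hng [b [Sb Hy]] [_ [_ Hj]] np [m [Sm Hm]].
pose C := psi (chi psi p).
pose D := fun x : G => x = 0 \/ C < psi x.
have [cpnz cpe] := h_chi Hai np.
have cpneg := h_chi_neg Htot Hac Hai np.
have Dsub : convex_subgroup D by exact: h_Dsub.
have [ccnz cce] := h_chi Hai cpnz.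
have ccneg := h_chi_neg Htot Hac Hai cpnz.
have Dnt : exists d, D d /\ d != 0.
  exists (chi psi (chi psi p)); split => //; right.
  rewrite /C -cce -[X in _ < X]add0r; exact: h_ltD.
have [g0 [Sg0 Hg0]] := Hj D Dsub Dnt.
have up : forall x y, S x -> S y -> exists z, S z /\ x <= z /\ y <= z.
  move=> x y Sx Sy; case/orP: (Htot x y) => h.
    by exists y; split => //; split.
  by exists x; split => //; split.
have [z1 [Sz1 [h1 h2]]] := up _ _ Sg0 Sb.
have [z [Sz [h3 h4]]] := up _ _ Sz1 Sm.
have [g [Sg zg]] := Hng _ Sz.
have g0g : g0 < g by apply: le_lt_trans zg; exact: le_trans h3.
have bg : b < g by apply: le_lt_trans zg; exact: le_trans h3.
have mg : m < g by exact: le_lt_trans h4 zg.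
have [gnz gle] := Hm _ Sg mg.
have [cgnz cge] := h_chi Hai gnz.
have cgneg := h_chi_neg Htot Hac Hai gnz.
have S2 := Hy _ Sg bg.
have gg2 : g < g - chi psi g.
  have : 0 + g < - chi psi g + g by apply: h_ltD => //; rewrite -oppr0; exact: h_oppLt.
  by rewrite add0r addrC.
have D1 := Hg0 _ Sg g0g.
have D2 := Hg0 _ S2 (lt_trans g0g gg2).
have D3 := (proj1 (proj2 Dsub)) _ _ D1 D2.
have e : (g - g0) - (g - chi psi g - g0) = chi psi g.
  by rewrite opprB addrA subrK opprB addrC subrK.
rewrite e in D3.
have cle : chi psi g <= chi psi p.
  apply: (h_deriv_mono Htot Htr Hac HH cgneg cpneg); by rewrite cge cpe.
have := h_psi_neg Htr Hac HH cle cpneg.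
case: D3 => [c0|hc]; first by rewrite c0 eqxx in cgnz.
move=> h; have := lt_le_trans hc h; by rewrite ltxx.
Qed.

Theorem lemma3p17 (G : porderZmodType) (psi : G -> G) (S : G -> Prop) :
  ordered_abelian_group G ->
  asymptotic_couple psi -> H_asymptotic psi -> has_asymptotic_integration psi ->
  nonempty S -> convex S -> no_greatest S -> yardstick psi S ->
  (jammed S <-> (forall d : G, downset S d <-> d < 0)).
Proof.
move=> [Htot Htr] Hac HH Hai Hne Hcv Hng Hy; split.
  move=> Hj d; split.
    case=> s [Ss ds]; apply: le_lt_trans ds _.
    apply: h_nle => // hs.
    have [t [St st]] := Hng _ Ss.
    have t0 : 0 < t by exact: le_lt_trans hs st.
    apply: (h_core Htot Htr Hac HH Hai Hng Hy Hj (p := t)).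
      by rewrite gt_eqF.
    exists t; split => // g Sg tg; split.
      by rewrite gt_eqF // (lt_trans t0 tg).
    by apply: HH => //; exact: ltW.
  move=> d0; case: (excluded_middle_informative (downset S d)) => // nd; exfalso.
  have all : forall s, S s -> s < d.
    move=> s Ss; apply: h_nle => // hds; apply: nd; by exists s.
  have [m Sm] := Hne.
  apply: (h_core Htot Htr Hac HH Hai Hng Hy Hj (p := d)).
    by rewrite lt_eqF.
  exists m; split => // g Sg _.
  have gd := all _ Sg.
  split; first by rewrite lt_eqF // (lt_trans gd d0).
  exact: (h_psi_neg Htr Hac HH (ltW gd) d0).
move=> Hd; split => //; split => //.
move=> D [D0 [Dsub Dcv]] [d [Dd dnz]].
have [e [De e0]] : exists e, D e /\ 0 < e.
  case/orP: (Htot d 0) => h.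
    exists (0 - d); split; first exact: Dsub.
    rewrite sub0r -oppr0; apply: h_oppLt => //; by rewrite lt_def eq_sym dnz h.
  by exists d; split => //; rewrite lt_def dnz h.
have ne0 : - e < 0 by rewrite -oppr0; exact: h_oppLt.
have [s [Ss es]] := (proj2 (Hd _)) ne0.
exists s; split => // g Sg sg.
have g0 : g < 0 by apply/(Hd g); exists g; split.
apply: (Dcv 0 _ e D0 De).
  have := Htr _ _ (- s) (ltW sg); by rewrite subrr.
have h1 : g - s <= 0 - s by apply: Htr; exact: ltW.
apply: le_trans h1 _; rewrite sub0r.
have := h_oppLe Htr es; by rewrite opprK.
Qed.
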